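(* Let $(\lambda,\boldsymbol p)\in\nabla$ and $\mu=\mu(\lambda,\boldsymbol p)=\lambda+\sum_ip_i$. If $k<\mu<k+1$ for some integer $k\ge0$, then $$m_+(\lambda,\boldsymbol p\setminus p_1)\le k\le m_-(\lambda,\boldsymbol p)\le m_+(\lambda,\boldsymbol p)\le k+1,$$ where $p_1=\max_ip_i$. If $\mu=k$ for an integer $k$, then $m_+(\lambda,\boldsymbol p)=m_-(\lambda,\boldsymbol p)=k$, unless $(\lambda,\boldsymbol p)=(k-a,1,\dots,1,0,0,\dots)$ with exactly $a$ ones, for some $k\ge1$ and $0\le a<k$, in which case the distribution is a Poisson distribution shifted to $\{a,a+1,\dots\}$ and has the twin mode $\{k-1,k\}$.
   Context: $\nabla=\{(\lambda,\boldsymbol p):\lambda\ge0,\ 1\ge p_1\ge p_2\ge\dots\ge0,\ \sum_ip_i<\infty\}$. For $(\lambda,\boldsymbol p)\in\nabla$ the extended Bernoulli sum is $S=X+\sum_iB_i$ with $X\sim\mathrm{Poisson}(\lambda)$, $B_i\sim\mathrm{Bernoulli}(p_i)$ independent; $f(k;\lambda,\boldsymbol p)=\mathbb P[S=k]$, $f(-1;\cdot)=0$; $\mu(\lambda,\boldsymbol p)=\mathbb E S$. The leading mode $m_+(\lambda,\boldsymbol p)$ is the unique integer $k$ with $f(k-1)\le f(k)>f(k+1)$; $m_-=m_+$ unless $f(m_+-1)=f(m_+)$, in which case $m_-=m_+-1$. $\boldsymbol p\setminus p_1$ denotes $\boldsymbol p$ with the term $p_1$ removed (replaced by $0$). *)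

(* Defs.v *)
From Stdlib Require Import Arith Factorial Reals Lra Lia ClassicalEpsilon.
From Coquelicot Require Import Coquelicot.
Open Scope R_scope.

Definition poisson_pmf (lam : R) (k : nat) : R :=
  exp (- lam) * lam ^ k / INR (fact k).

(* Sequences p are indexed from 0: p 0 = p_1, p 1 = p_2, ... *)

Definition in_nabla (lam : R) (p : nat -> R) : Prop :=
  0 <= lam /\ p 0%nat <= 1 /\ (forall i, p (S i) <= p i) /\ (forall i, 0 <= p i)
  /\ ex_series p.

(* pmf of X + B_1 + ... + B_n, X ~ Poisson(lam), B_i ~ Bernoulli(p_i) indep. *)
Fixpoint fin_pmf (lam : R) (p : nat -> R) (n : nat) (k : nat) : R :=
  match n with
  | O => poisson_pmf lam k
  | S m => (1 - p m) * fin_pmf lam p m k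
           + p m * (match k with O => 0 | S k' => fin_pmf lam p m k' end)
  end.

(* f(k; lam, p) = P[S = k] for S = X + sum_i B_i, obtained as the limit of
   P[X + B_1 + ... + B_n = k] (S_n -> S a.s. since sum p_i < oo). *)
Definition ebs_pmf (lam : R) (p : nat -> R) (k : nat) : R :=
  Lim_seq (fun n => fin_pmf lam p n k).

Definition ebs_pmf_pred (lam : R) (p : nat -> R) (k : nat) : R :=
  match k with O => 0 | S k' => ebs_pmf lam p k' end.

Definition ebs_mean (lam : R) (p : nat -> R) : R := lam + Series p.

Definition is_lead_mode (lam : R) (p : nat -> R) (k : nat) : Prop :=
  ebs_pmf_pred lam p k <= ebs_pmf lam p k /\ ebs_pmf lam p (S k) < ebs_pmf lam p k.

Definition m_plus (lam : R) (p : nat -> R) : nat :=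
  epsilon (inhabits 0%nat) (is_lead_mode lam p).

Definition m_minus (lam : R) (p : nat -> R) : nat :=
  let m := m_plus lam p in
  match excluded_middle_informative (ebs_pmf_pred lam p m = ebs_pmf lam p m) with
  | left _ => (m - 1)%nat
  | right _ => m
  end.

(* p \ p_1 : p with the term p_1 replaced by 0. *)
Definition drop_first (p : nat -> R) : nat -> R :=
  fun i => match i with O => 0 | S _ => p i end.

(* Main.v *)
Require Import Defs.
From Stdlib Require Import Arith Factorial Reals Lra Lia ClassicalEpsilon.
From Coquelicot Require Import Coquelicot.
Open Scope R_scope.

Definition sh (F : nat -> R) (k : nat) : R := match k with O => 0 | S k' => F k' end.
Definition zat (i : nat) (p : nat -> R) : nat -> R := fun l => if Nat.eqb l i then 0 else p l.
Fixpoint sumi (n : nat) (g : nat -> R) : R := match n with O => 0 | S m => sumi m g + g m end.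
Definition goodp (p : nat -> R) := forall i, 0 <= p i <= 1.

Lemma sumi_ext n g h : (forall i, (i < n)%nat -> g i = h i) -> sumi n g = sumi n h.
Proof. induction n; simpl; intros H; auto. rewrite IHn by (intros; apply H; lia). rewrite H by lia. auto. Qed.
Lemma sumi_le n g h : (forall i, (i < n)%nat -> g i <= h i) -> sumi n g <= sumi n h.
Proof. induction n; simpl; intros H; [lra|]. assert (sumi n g <= sumi n h) by (apply IHn; intros; apply H; lia).
 assert (g n <= h n) by (apply H; lia). lra. Qed.
Lemma sumi_plus n g h : sumi n (fun i => g i + h i) = sumi n g + sumi n h.
Proof. induction n; simpl; [lra|]. rewrite IHn. lra. Qed.
Lemma sumi_scal n c g : sumi n (fun i => c * g i) = c * sumi n g.
Proof. induction n; simpl; [lra|]. rewrite IHn. lra. Qed.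
Lemma sumi_minus n g h : sumi n (fun i => g i - h i) = sumi n g - sumi n h.
Proof. induction n; simpl; [lra|]. rewrite IHn. lra. Qed.
Lemma sumi_nonneg n g : (forall i, (i < n)%nat -> 0 <= g i) -> 0 <= sumi n g.
Proof. intros H. replace 0 with (sumi n (fun _ => 0)). apply sumi_le; auto.
 clear H; induction n; simpl; auto; rewrite IHn; lra. Qed.
Lemma sumi_single n i g : (i < n)%nat -> (forall l, (l < n)%nat -> 0 <= g l) -> g i <= sumi n g.
Proof. induction n; intros Hi H; [lia|]. simpl. destruct (Nat.eq_dec i n).
 - subst. assert (0 <= sumi n g) by (apply sumi_nonneg; intros; apply H; lia). lra.
 - assert (g i <= sumi n g) by (apply IHn; [lia| intros; apply H; lia]). assert (0 <= g n) by (apply H; lia). lra. Qed.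

Lemma fin_S lam p n k : fin_pmf lam p (S n) k = (1 - p n) * fin_pmf lam p n k + p n * sh (fin_pmf lam p n) k.
Proof. destruct k; reflexivity. Qed.

Lemma poisson_nonneg lam k : 0 <= lam -> 0 <= poisson_pmf lam k.
Proof. intros. unfold poisson_pmf. apply Rmult_le_pos. apply Rmult_le_pos. left; apply exp_pos.
 apply pow_le; auto. left; apply Rinv_0_lt_compat, INR_fact_lt_0. Qed.
Lemma poisson_S lam k : poisson_pmf lam (S k) = poisson_pmf lam k * lam / INR (S k).
Proof. unfold poisson_pmf. rewrite fact_simpl, mult_INR. simpl pow.
 assert (INR (fact k) <> 0) by apply INR_fact_neq_0. assert (INR (S k) <> 0) by (apply not_0_INR; lia).
 field; auto. Qed.

Lemma fin_nonneg lam p n k : 0 <= lam -> goodp p -> 0 <= fin_pmf lam p n k.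
Proof. intros Hl Hp. revert k; induction n; intros k. apply poisson_nonneg; auto.
 rewrite fin_S. destruct (Hp n). assert (0 <= sh (fin_pmf lam p n) k) by (destruct k; simpl; auto; lra).
 specialize (IHn k). nra. Qed.

Lemma fin_ext lam p p' n k : (forall i, (i < n)%nat -> p i = p' i) -> fin_pmf lam p n k = fin_pmf lam p' n k.
Proof. revert k; induction n; intros k H; auto. rewrite !fin_S. rewrite H by lia.
 rewrite IHn by (intros; apply H; lia). destruct k; simpl; auto. rewrite IHn by (intros; apply H; lia). auto. Qed.

Lemma zat_eq i p l : l <> i -> zat i p l = p l.
Proof. intros. unfold zat. destruct (Nat.eqb_spec l i); auto; lia. Qed.
Lemma zat_i i p : zat i p i = 0.
Proof. unfold zat. rewrite Nat.eqb_refl. auto. Qed.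
Lemma goodp_zat i p : goodp p -> goodp (zat i p).
Proof. intros H l. unfold zat. destruct (Nat.eqb l i); auto. lra. Qed.
Lemma zat_comm i l p : forall x, zat i (zat l p) x = zat l (zat i p) x.
Proof. intros x. unfold zat. destruct (Nat.eqb x i), (Nat.eqb x l); auto. Qed.

Lemma sumi_zat n i p : (i < n)%nat -> sumi n (zat i p) = sumi n p - p i.
Proof. induction n; intros Hi; [lia|]. simpl. destruct (Nat.eq_dec i n).
 - subst. rewrite zat_i. rewrite (sumi_ext n (zat n p) p) by (intros; apply zat_eq; lia). lra.
 - rewrite IHn by lia. rewrite zat_eq by lia. lra. Qed.

Lemma fin_zat_ge lam p n i k : (n <= i)%nat -> fin_pmf lam (zat i p) n k = fin_pmf lam p n k.
Proof. intros. apply fin_ext. intros. apply zat_eq. lia. Qed.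

Lemma sh_mix a b (G : nat -> R) k :
  sh (fun x => (1 - a) * G x + b * sh G x) k = (1 - a) * sh G k + b * sh (sh G) k.
Proof. destruct k; simpl; lra. Qed.

Lemma fin_zat_last lam p n k : fin_pmf lam (zat n p) (S n) k = fin_pmf lam p n k.
Proof. rewrite fin_S, zat_i, fin_zat_ge by lia. ring. Qed.

Lemma fin_remove lam p n i k : (i < n)%nat ->
  fin_pmf lam p n k = (1 - p i) * fin_pmf lam (zat i p) n k + p i * sh (fin_pmf lam (zat i p) n) k.
Proof. revert k. induction n; intros k Hi; [lia|]. destruct (Nat.eq_dec i n).
 - subst i. rewrite fin_zat_last. destruct k; cbn [sh]; [|rewrite fin_zat_last]; rewrite fin_S; cbn [sh]; ring.
 - assert (Hi' : (i < n)%nat) by lia.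
   rewrite (fin_S lam p n k), (fin_S lam (zat i p) n k). rewrite (zat_eq i p n) by lia.
   destruct k as [|k]; cbn [sh].
   + rewrite (IHn 0%nat Hi'). cbn [sh]. ring.
   + rewrite (IHn (S k) Hi'), (IHn k Hi'), (fin_S lam (zat i p) n k), (zat_eq i p n) by lia. cbn [sh]. ring. Qed.

Definition LCP (F : nat -> R) := forall a b, (a <= b)%nat -> sh F a * F (S b) <= F a * F b.

Lemma LC_poisson lam : 0 <= lam -> LCP (poisson_pmf lam).
Proof. intros Hl a b Hab. destruct a as [|a]; cbn [sh].
 - rewrite Rmult_0_l. apply Rmult_le_pos; apply poisson_nonneg; auto.
 - rewrite !poisson_S. assert (0 <= poisson_pmf lam a) by (apply poisson_nonneg; auto).
   assert (0 <= poisson_pmf lam b) by (apply poisson_nonneg; auto).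
   assert (HX : 0 <= poisson_pmf lam a * poisson_pmf lam b * lam) by (apply Rmult_le_pos; [apply Rmult_le_pos|]; auto).
   assert (H1: 0 < INR (S a)) by (apply lt_0_INR; lia).
   assert (H2: INR (S a) <= INR (S b)) by (apply le_INR; lia).
   assert (/ INR (S b) <= / INR (S a)) by (apply Rinv_le_contravar; auto).
   replace (poisson_pmf lam a * (poisson_pmf lam b * lam / INR (S b))) with
     (poisson_pmf lam a * poisson_pmf lam b * lam * / INR (S b)) by (unfold Rdiv; ring).
   replace (poisson_pmf lam a * lam / INR (S a) * poisson_pmf lam b) with
     (poisson_pmf lam a * poisson_pmf lam b * lam * / INR (S a)) by (unfold Rdiv; ring).
   apply Rmult_le_compat_l; auto. Qed.

Lemma LC_mix F q : LCP F -> (forall k, 0 <= F k) -> 0 <= q <= 1 ->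
  LCP (fun k => (1 - q) * F k + q * sh F k).
Proof. intros HL Hn Hq a b Hab. destruct a as [|a]; cbn [sh].
 - rewrite Rmult_0_l. assert (forall k, 0 <= sh F k) by (intros [|k]; cbn [sh]; auto; lra).
   apply Rmult_le_pos; apply Rplus_le_le_0_compat; apply Rmult_le_pos; auto; lra.
 - destruct b as [|b]; [lia|]. cbn [sh].
   assert (L1 := HL (S a) (S b) ltac:(lia)). cbn [sh] in L1.
   assert (L2 := HL a b ltac:(lia)).
   assert (L3 : sh F a * F (S (S b)) <= F (S a) * F b).
   { destruct (Nat.eq_dec a b).
     - subst b. assert (H := HL a (S a) ltac:(lia)). lra.
     - assert (H1 := HL (S a) b ltac:(lia)). cbn [sh] in H1. assert (H2 := HL a (S b) ltac:(lia)). lra. }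
   assert (E : ((1 - q) * F (S a) + q * F a) * ((1 - q) * F (S b) + q * F b)
     - ((1 - q) * F a + q * sh F a) * ((1 - q) * F (S (S b)) + q * F (S b)) =
     (1-q)^2 * (F (S a) * F (S b) - F a * F (S (S b))) + q^2 * (F a * F b - sh F a * F (S b))
     + q * (1-q) * (F (S a) * F b - sh F a * F (S (S b)))) by ring.
   assert (0 <= (1-q)^2 * (F (S a) * F (S b) - F a * F (S (S b)))) by (apply Rmult_le_pos; nra).
   assert (0 <= q^2 * (F a * F b - sh F a * F (S b))) by (apply Rmult_le_pos; nra).
   assert (0 <= q * (1-q) * (F (S a) * F b - sh F a * F (S (S b)))) by (apply Rmult_le_pos; nra).
   lra. Qed.

Lemma fin_LC lam p n : 0 <= lam -> goodp p -> LCP (fin_pmf lam p n).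
Proof. intros Hl Hp. induction n. apply LC_poisson; auto.
 intros a b Hab. assert (H := LC_mix (fin_pmf lam p n) (p n) IHn (fun k => fin_nonneg lam p n k Hl Hp) (Hp n) a b Hab).
 cbv beta in H. rewrite !fin_S. replace (sh (fin_pmf lam p (S n)) a) with
  (sh (fun k => (1 - p n) * fin_pmf lam p n k + p n * sh (fin_pmf lam p n) k) a).
 exact H. destruct a; cbn [sh]; try reflexivity. all: rewrite fin_S; auto. Qed.

Lemma sumi_zero n : sumi n (fun _ => 0) = 0.
Proof. induction n; simpl; auto. rewrite IHn; ring. Qed.

Lemma sumi_const n c g : sumi n (fun i => g i * c) = sumi n g * c.
Proof. induction n; simpl; [ring|]. rewrite IHn; ring. Qed.

Lemma poisson_SB lam m : INR m * poisson_pmf lam m = lam * sh (poisson_pmf lam) m.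
Proof. destruct m; cbn [sh]. simpl; ring. rewrite poisson_S.
 assert (INR (S m) <> 0) by (apply not_0_INR; lia). field; auto. Qed.

Lemma fin_SB lam p n m :
  INR m * fin_pmf lam p n m = lam * sh (fin_pmf lam p n) m
     + sumi n (fun i => p i * sh (fin_pmf lam (zat i p) n) m).
Proof. revert m. induction n; intros m.
 - simpl sumi. rewrite Rplus_0_r. apply poisson_SB.
 - destruct m as [|m]; cbn [sh].
   + rewrite (sumi_ext _ _ (fun _ => 0)) by (intros; ring). rewrite sumi_zero. simpl INR. ring.
   + cbn [sumi]. rewrite fin_zat_last.
     rewrite (sumi_ext n _ (fun i => (1 - p n) * (p i * fin_pmf lam (zat i p) n m)
        + p n * (p i * sh (fin_pmf lam (zat i p) n) m))).
     2:{ intros i Hi. rewrite fin_S, zat_eq by lia. ring. }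
     rewrite sumi_plus, !sumi_scal.
     rewrite (fin_S lam p n (S m)), (fin_S lam p n m). cbn [sh].
     assert (H1 := IHn (S m)). cbn [sh] in H1.
     assert (H2 := IHn m).
     rewrite S_INR. rewrite S_INR in H1.
     replace ((INR m + 1) * ((1 - p n) * fin_pmf lam p n (S m) + p n * fin_pmf lam p n m)) with
       ((1 - p n) * ((INR m + 1) * fin_pmf lam p n (S m)) + p n * (INR m * fin_pmf lam p n m) + p n * fin_pmf lam p n m) by ring.
     rewrite H1, H2. ring. Qed.

Section Fin.
Variable lam : R.
Hypothesis Hl : 0 <= lam.

Notation F p n := (fin_pmf lam p n).
Notation mu p n := (lam + sumi n p).

Lemma sh_remove p n i k : (i < n)%nat ->
  sh (F p n) k = (1 - p i) * sh (F (zat i p) n) k + p i * sh (sh (F (zat i p) n)) k.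
Proof. intros. destruct k; cbn [sh]; [ring| apply fin_remove; auto]. Qed.

Lemma sh_nonneg (G : nat -> R) k : (forall x, 0 <= G x) -> 0 <= sh G k.
Proof. intros; destruct k; cbn [sh]; auto; lra. Qed.

Lemma UI p n k :
  INR k * F p n k - mu p n * sh (F p n) k =
  sumi n (fun i => p i ^ 2 * (sh (F (zat i p) n) k - sh (sh (F (zat i p) n)) k)).
Proof. rewrite fin_SB. rewrite Rmult_plus_distr_r, <- sumi_const.
 replace (lam * sh (F p n) k + sumi n (fun i => p i * sh (F (zat i p) n) k) -
  (lam * sh (F p n) k + sumi n (fun i => p i * sh (F p n) k))) with
  (sumi n (fun i => p i * sh (F (zat i p) n) k) - sumi n (fun i => p i * sh (F p n) k)) by ring.
 rewrite <- sumi_minus. apply sumi_ext. intros i Hi. rewrite (sh_remove p n i k Hi). ring. Qed.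

Lemma DI p n k :
  INR (S k) * F p n (S k) - mu p n * F p n k =
  sumi n (fun i => p i ^ 2 * (F (zat i p) n k - sh (F (zat i p) n) k)).
Proof. rewrite fin_SB. cbn [sh]. rewrite Rmult_plus_distr_r, <- sumi_const.
 replace (lam * F p n k + sumi n (fun i => p i * F (zat i p) n k) -
  (lam * F p n k + sumi n (fun i => p i * F p n k))) with
  (sumi n (fun i => p i * F (zat i p) n k) - sumi n (fun i => p i * F p n k)) by ring.
 rewrite <- sumi_minus. apply sumi_ext. intros i Hi. rewrite (fin_remove lam p n i k Hi). ring. Qed.

Lemma I1 p n k :
  INR k * F p n k - mu p n * F p n k =
  lam * (sh (F p n) k - F p n k) - sumi n (fun i => p i * (1 - p i) * (F (zat i p) n k - sh (F (zat i p) n) k)).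
Proof. rewrite fin_SB. rewrite Rmult_plus_distr_r, <- sumi_const.
 assert (E : sumi n (fun i => p i * sh (F (zat i p) n) k) - sumi n (fun i => p i * F p n k) =
   - sumi n (fun i => p i * (1 - p i) * (F (zat i p) n k - sh (F (zat i p) n) k))).
 { rewrite <- sumi_minus.
   transitivity (-1 * sumi n (fun i => p i * (1 - p i) * (F (zat i p) n k - sh (F (zat i p) n) k))); [|ring].
   rewrite <- sumi_scal.
   apply sumi_ext. intros i Hi. rewrite (fin_remove lam p n i k Hi). ring. }
 lra. Qed.

Lemma mu_zat p n i : (i < n)%nat -> mu (zat i p) n = mu p n - p i.
Proof. intros. rewrite sumi_zat; auto. ring. Qed.

Lemma U_fin k : forall p n, goodp p -> mu p n >= INR k -> sh (F p n) k <= F p n k.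
Proof. induction k; intros p n Hp Hmu.
 - cbn [sh]. apply fin_nonneg; auto.
 - cbn [sh]. assert (Hs : 0 <= sumi n (fun i => p i ^ 2 * (sh (F (zat i p) n) (S k) - sh (sh (F (zat i p) n)) (S k)))).
   { apply sumi_nonneg. intros i Hi. cbn [sh]. apply Rmult_le_pos. apply pow2_ge_0.
     assert (H := IHk (zat i p) n (goodp_zat i p Hp)). rewrite mu_zat in H by auto.
     destruct (Hp i). rewrite S_INR in Hmu. specialize (H ltac:(lra)). destruct k; cbn [sh] in *; lra. }
   rewrite <- UI in Hs. cbn [sh] in Hs. assert (0 <= F p n k) by (apply fin_nonneg; auto).
   assert (0 < INR (S k)) by (apply lt_0_INR; lia).
   assert (INR (S k) * F p n k <= INR (S k) * F p n (S k)) by nra.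
   apply Rmult_le_reg_l with (INR (S k)); auto. Qed.

Lemma Uterm_nonneg p n k l : goodp p -> mu p n >= INR k -> (l < n)%nat ->
  0 <= p l ^ 2 * (sh (F (zat l p) n) k - sh (sh (F (zat l p) n)) k).
Proof. intros Hp Hmu Hl'. apply Rmult_le_pos. apply pow2_ge_0. destruct k; cbn [sh]. lra.
 assert (H := U_fin k (zat l p) n (goodp_zat l p Hp)). rewrite mu_zat in H by auto.
 destruct (Hp l). rewrite S_INR in Hmu. specialize (H ltac:(lra)). lra. Qed.

Lemma Ustar_fin p n k : goodp p -> mu p n >= INR k -> mu p n * sh (F p n) k <= INR k * F p n k.
Proof. intros Hp Hmu. assert (H := UI p n k).
 assert (0 <= sumi n (fun i => p i ^ 2 * (sh (F (zat i p) n) k - sh (sh (F (zat i p) n)) k))).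
 { apply sumi_nonneg. intros. apply Uterm_nonneg; auto. } lra. Qed.

Lemma Ustar_single p n k i : goodp p -> mu p n >= INR k -> (i < n)%nat ->
  p i ^ 2 * (sh (F (zat i p) n) k - sh (sh (F (zat i p) n)) k) <= INR k * F p n k - mu p n * sh (F p n) k.
Proof. intros Hp Hmu Hi. rewrite UI. apply (sumi_single n i (fun i => p i ^ 2 * (sh (F (zat i p) n) k - sh (sh (F (zat i p) n)) k))); auto.
 intros. apply Uterm_nonneg; auto. Qed.

Lemma LC_sh (H : nat -> R) j : LCP H -> sh (sh H) j * H j <= sh H j * sh H j.
Proof. intros HL. destruct j; cbn [sh]. lra. apply HL. lia. Qed.

Lemma SC p n i l j : goodp p -> (i < n)%nat -> (l < n)%nat -> i <> l -> p l <= p i ->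
  sh (F (zat l p) n) j * F (zat i p) n j <= sh (F (zat i p) n) j * F (zat l p) n j.
Proof. intros Hp Hi Hl' Hil Hpl.
 set (H := F (zat i (zat l p)) n).
 assert (E1 : forall k, F (zat l p) n k = (1 - p i) * H k + p i * sh H k).
 { intros k. rewrite (fin_remove lam (zat l p) n i k Hi). rewrite zat_eq by auto. reflexivity. }
 assert (E2 : forall k, F (zat i p) n k = (1 - p l) * H k + p l * sh H k).
 { intros k. rewrite (fin_remove lam (zat i p) n l k Hl'). rewrite zat_eq by auto.
   unfold H. rewrite !(fin_ext lam (zat l (zat i p)) (zat i (zat l p)) n) by (intros; apply zat_comm).
   destruct k; cbn [sh]; auto. rewrite (fin_ext lam (zat l (zat i p)) (zat i (zat l p)) n) by (intros; apply zat_comm). auto. }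
 assert (S1 : sh (F (zat l p) n) j = (1 - p i) * sh H j + p i * sh (sh H) j).
 { destruct j; cbn [sh]. ring. apply E1. }
 assert (S2 : sh (F (zat i p) n) j = (1 - p l) * sh H j + p l * sh (sh H) j).
 { destruct j; cbn [sh]. ring. apply E2. }
 rewrite S1, S2, E1, E2.
 assert (LC := LC_sh H j (fin_LC lam _ n Hl (goodp_zat i _ (goodp_zat l p Hp)))).
 assert (E : ((1 - p i) * sh H j + p i * sh (sh H) j) * ((1 - p l) * H j + p l * sh H j) -
   ((1 - p l) * sh H j + p l * sh (sh H) j) * ((1 - p i) * H j + p i * sh H j) =
   (p l - p i) * (sh H j * sh H j - sh (sh H) j * H j)) by ring.
 assert (0 <= (p i - p l) * (sh H j * sh H j - sh (sh H) j * H j)) by (apply Rmult_le_pos; lra).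
 lra. Qed.

Lemma R0 p n i j : goodp p -> (i < n)%nat ->
  sh (F p n) j * F (zat i p) n j <= sh (F (zat i p) n) j * F p n j.
Proof. intros Hp Hi. set (H := F (zat i p) n).
 rewrite (sh_remove p n i j Hi), (fin_remove lam p n i j Hi). fold H.
 assert (LC := LC_sh H j (fin_LC lam _ n Hl (goodp_zat i p Hp))).
 destruct (Hp i). assert (0 <= p i * (sh H j * sh H j - sh (sh H) j * H j)) by (apply Rmult_le_pos; lra).
 assert (E : ((1 - p i) * sh H j + p i * sh (sh H) j) * H j - sh H j * ((1 - p i) * H j + p i * sh H j)
   = - (p i * (sh H j * sh H j - sh (sh H) j * H j))) by ring.
 lra. Qed.

Definition dd p n i j := F (zat i p) n j - sh (F (zat i p) n) j.

Lemma SC' p n i l j : goodp p -> (i < n)%nat -> (l < n)%nat -> p l <= p i ->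
  dd p n i j > 0 -> dd p n l j >= 0.
Proof. intros Hp Hi Hl' Hpl Hd. unfold dd in *. destruct (Nat.eq_dec i l). subst; lra.
 assert (H := SC p n i l j Hp Hi Hl' n0 Hpl).
 assert (0 <= sh (F (zat i p) n) j) by (apply sh_nonneg; intros; apply fin_nonneg; auto; apply goodp_zat; auto).
 assert (0 <= F (zat l p) n j) by (apply fin_nonneg; auto; apply goodp_zat; auto).
 assert (sh (F (zat i p) n) j * F (zat l p) n j <= F (zat i p) n j * F (zat l p) n j) by nra.
 assert (0 < F (zat i p) n j) by lra.
 assert (sh (F (zat l p) n) j <= F (zat l p) n j).
 { apply Rmult_le_reg_r with (F (zat i p) n j); auto. nra. } lra. Qed.

Lemma R0' p n i j : goodp p -> (i < n)%nat -> sh (F p n) j > F p n j -> dd p n i j <= 0.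
Proof. intros Hp Hi Hgt. unfold dd. assert (H := R0 p n i j Hp Hi).
 assert (0 <= sh (F (zat i p) n) j) by (apply sh_nonneg; intros; apply fin_nonneg; auto; apply goodp_zat; auto).
 assert (0 <= F p n j) by (apply fin_nonneg; auto).
 destruct (Rle_dec (F (zat i p) n j) (sh (F (zat i p) n) j)); [lra|]. exfalso.
 assert (sh (F (zat i p) n) j * F p n j <= F (zat i p) n j * F p n j) by nra.
 assert (sh (F p n) j <= F p n j).
 { apply Rmult_le_reg_r with (F (zat i p) n j); [lra|]. nra. } lra. Qed.

Lemma tmax p n j m : (m <= n)%nat -> goodp p -> exists t, 0 <= t /\
  (forall i, (i < m)%nat -> dd p n i j > 0 -> p i <= t) /\
  (t = 0 \/ exists i, (i < m)%nat /\ dd p n i j > 0 /\ t = p i).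
Proof. intros Hm Hp. induction m.
 - exists 0. split; [lra|]. split; [intros; lia| auto].
 - destruct IHm as [t [Ht0 [Ht1 Ht2]]]; [lia|].
   destruct (Rlt_dec 0 (dd p n m j)) as [Hd|Hd]; [destruct (Rlt_dec t (p m)) as [Hlt|Hlt]|].
   + exists (p m). split; [destruct (Hp m); lra|]. split.
     * intros i Hi Hdi. destruct (Nat.eq_dec i m). subst; lra. assert (p i <= t) by (apply Ht1; auto; lia). lra.
     * right. exists m. repeat split; auto; lra.
   + exists t. split; auto. split.
     * intros i Hi Hdi. destruct (Nat.eq_dec i m). subst; lra. apply Ht1; auto; lia.
     * destruct Ht2 as [?|[i [? [? ?]]]]; auto. right. exists i. repeat split; auto; lia.
   + exists t. split; auto. split.
     * intros i Hi Hdi. destruct (Nat.eq_dec i m). subst; lra. apply Ht1; auto; lia.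
     * destruct Ht2 as [?|[i [? [? ?]]]]; auto. right. exists i. repeat split; auto; lia. Qed.

Lemma core p n j : goodp p -> (forall i, (i < n)%nat -> dd p n i j > 0 -> p i < 1) ->
  exists t, 0 <= t < 1 /\ (t = 0 \/ exists i, (i < n)%nat /\ t = p i) /\
   (sumi n (fun i => p i ^ 2 * dd p n i j) <= 0 \/
    (1 - t) * sumi n (fun i => p i ^ 2 * dd p n i j) <= t * (mu p n - INR j) * F p n j).
Proof. intros Hp Hfin.
 destruct (Rlt_dec (F p n j) (sh (F p n) j)) as [Hgt|Hle].
 - exists 0. split; [lra|]. split; [auto|]. left. rewrite <- (sumi_zero n). apply sumi_le.
   intros i Hi. assert (dd p n i j <= 0) by (apply R0'; auto). assert (0 <= p i ^ 2) by apply pow2_ge_0. nra.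
 - destruct (tmax p n j n (Nat.le_refl n) Hp) as [t [Ht0 [Ht1 Ht2]]].
   assert (Ht1' : t < 1). { destruct Ht2 as [->|[i [Hi [Hd ->]]]]. lra. apply Hfin; auto. }
   exists t. split; [lra|]. split. { destruct Ht2 as [?|[i [? [? ?]]]]; auto. right; exists i; auto. }
   right. assert (Hsum : (1 - t) * sumi n (fun i => p i ^ 2 * dd p n i j) <=
      t * sumi n (fun i => p i * (1 - p i) * dd p n i j)).
   { rewrite <- !sumi_scal. apply sumi_le. intros i Hi. destruct (Hp i) as [Hp0 Hp1].
     destruct (Rtotal_order (dd p n i j) 0) as [Hneg|[Hz|Hpos]].
     - assert (t <= p i).
       { destruct Ht2 as [->|[i0 [Hi0 [Hd0 ->]]]]; auto.
         destruct (Rle_dec (p i0) (p i)); auto.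
         assert (dd p n i j >= 0) by (apply (SC' p n i0 i j); auto; lra). lra. }
       assert (E : t * (p i * (1 - p i) * dd p n i j) - (1 - t) * (p i ^ 2 * dd p n i j)
         = p i * (- dd p n i j) * (p i - t)) by ring.
       assert (0 <= p i * (- dd p n i j) * (p i - t)) by (apply Rmult_le_pos; [apply Rmult_le_pos|]; lra). lra.
     - rewrite Hz. lra.
     - assert (p i <= t) by (apply Ht1; auto).
       assert (E : t * (p i * (1 - p i) * dd p n i j) - (1 - t) * (p i ^ 2 * dd p n i j)
         = p i * dd p n i j * (t - p i)) by ring.
       assert (0 <= p i * dd p n i j * (t - p i)) by (apply Rmult_le_pos; [apply Rmult_le_pos|]; lra). lra. }
   assert (HI := I1 p n j). unfold dd in Hsum.
   assert (0 <= F p n j) by (apply fin_nonneg; auto).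
   assert (sumi n (fun i => p i * (1 - p i) * (F (zat i p) n j - sh (F (zat i p) n) j)) <= (mu p n - INR j) * F p n j).
   { assert (0 <= lam * (F p n j - sh (F p n) j)) by (apply Rmult_le_pos; lra). lra. }
   unfold dd. assert (t * sumi n (fun i => p i * (1 - p i) * (F (zat i p) n j - sh (F (zat i p) n) j)) <= t * ((mu p n - INR j) * F p n j)) by (apply Rmult_le_compat_l; lra).
   lra. Qed.

Lemma Dstar_fin j : forall p n, goodp p -> mu p n <= INR j -> INR (S j) * F p n (S j) <= mu p n * F p n j.
Proof. induction j; intros p n Hp Hmu.
 - assert (Hfin : forall i, (i < n)%nat -> dd p n i 0 > 0 -> p i < 1).
   { intros i Hi _. assert (p i <= sumi n p) by (apply sumi_single; auto; intros; apply Hp).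
     simpl in Hmu. destruct (Hp i). lra. }
   destruct (core p n 0 Hp Hfin) as [t [Ht [_ [H|H]]]].
   + assert (E := DI p n 0). fold (dd p n) in E. unfold dd in *. lra.
   + assert (E := DI p n 0). unfold dd in *. simpl INR in *.
     assert (0 <= F p n 0) by (apply fin_nonneg; auto).
     assert (t * (mu p n - 0) * F p n 0 <= 0). { assert (mu p n - 0 <= 0) by lra. assert (0 <= t * F p n 0) by nra. nra. }
     assert (sumi n (fun i => p i ^ 2 * (F (zat i p) n 0 - sh (F (zat i p) n) 0)) <= 0).
     { apply Rmult_le_reg_l with (1 - t). lra. lra. } lra.
 - assert (Hfin : forall i, (i < n)%nat -> dd p n i (S j) > 0 -> p i < 1).
   { intros i Hi Hd. destruct (Hp i) as [Hp0 Hp1]. destruct (Rlt_dec (p i) 1); auto. exfalso.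
     assert (Hpi : p i = 1) by lra.
     assert (H := IHj (zat i p) n (goodp_zat i p Hp)). rewrite mu_zat in H by auto.
     rewrite S_INR in Hmu. specialize (H ltac:(lra)).
     assert (0 <= F (zat i p) n j) by (apply fin_nonneg; auto; apply goodp_zat; auto).
     unfold dd in Hd. cbn [sh] in Hd. rewrite S_INR in H.
     assert ((mu p n - p i) * F (zat i p) n j <= INR j * F (zat i p) n j) by (apply Rmult_le_compat_r; lra).
     assert (INR j * F (zat i p) n j <= INR j * F (zat i p) n (S j)) by (apply Rmult_le_compat_l; [apply pos_INR|lra]).
     lra. }
   destruct (core p n (S j) Hp Hfin) as [t [Ht [_ [H|H]]]].
   + assert (E := DI p n (S j)). unfold dd in *. lra.
   + assert (E := DI p n (S j)). unfold dd in *.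
     assert (0 <= F p n (S j)) by (apply fin_nonneg; auto).
     assert (t * (mu p n - INR (S j)) * F p n (S j) <= 0).
     { assert (0 <= t * F p n (S j)) by nra. nra. }
     assert (sumi n (fun i => p i ^ 2 * (F (zat i p) n (S j) - sh (F (zat i p) n) (S j))) <= 0).
     { apply Rmult_le_reg_l with (1 - t). lra. lra. } lra. Qed.

Lemma Dss_fin p n j pb : goodp p -> 0 <= pb <= 1 -> (forall i, p i <= pb) -> mu p n + pb <= INR j + 1 ->
  INR (S j) * F p n (S j) <= (mu p n + pb) * F p n j.
Proof. intros Hp Hpb Hle Hmu. assert (HF0 : 0 <= F p n j) by (apply fin_nonneg; auto).
 destruct (Req_dec pb 1) as [Hpb1|Hpb1].
 - subst pb. assert (HD := Dstar_fin j p n Hp ltac:(lra)). lra.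
 - assert (Hfin : forall i, (i < n)%nat -> dd p n i j > 0 -> p i < 1) by (intros i _ _; specialize (Hle i); lra).
   destruct (core p n j Hp Hfin) as [t [Ht [Ht2 [H|H]]]].
   + assert (E := DI p n j). unfold dd in *. assert (0 <= pb * F p n j) by nra. lra.
   + assert (E := DI p n j). unfold dd in *.
     assert (Htp : t <= pb). { destruct Ht2 as [->|[i [_ ->]]]; auto; lra. }
     assert (t * (mu p n - INR j) * F p n j <= (1 - t) * (pb * F p n j)).
     { assert (t * (mu p n - INR j) <= (1 - t) * pb) by nra. nra. }
     assert (sumi n (fun i => p i ^ 2 * (F (zat i p) n j - sh (F (zat i p) n) j)) <= pb * F p n j).
     { apply Rmult_le_reg_l with (1 - t). lra. lra. } lra. Qed.

End Fin.

Fixpoint cum (G : nat -> R) (k : nat) : R := match k with O => G O | S k' => cum G k' + G (S k') end.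

Lemma cum_sh G m : sh (cum G) m + G m = cum G m.
Proof. destruct m; cbn [sh cum]; ring. Qed.
Lemma cum_ext G G' m : (forall k, G k = G' k) -> cum G m = cum G' m.
Proof. intros H; induction m; simpl; rewrite ?IHm, H; auto. Qed.
Lemma cum_nonneg G m : (forall k, 0 <= G k) -> 0 <= cum G m.
Proof. intros H; induction m; simpl; auto. specialize (H (S m)); lra. Qed.
Lemma cum_mono G m m' : (forall k, 0 <= G k) -> (m <= m')%nat -> cum G m <= cum G m'.
Proof. intros H Hm. induction Hm. lra. simpl. specialize (H (S m0)). lra. Qed.
Lemma cum_ge0 G m : (forall k, 0 <= G k) -> G 0%nat <= cum G m.
Proof. intros H. apply (cum_mono G 0 m H). lia. Qed.
Lemma cum_mix a G m : cum (fun k => (1 - a) * G k + a * sh G k) m = (1 - a) * cum G m + a * sh (cum G) m.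
Proof. induction m. simpl; ring. cbn [cum]. rewrite IHm. cbn [sh]. rewrite <- (cum_sh G m). ring. Qed.
Lemma sh_le_cum G m : (forall k, 0 <= G k) -> sh (cum G) m <= cum G m.
Proof. intros H. rewrite <- (cum_sh G m). specialize (H m). lra. Qed.

Lemma cumS G m : cum G (S m) = cum G m + G (S m).
Proof. reflexivity. Qed.

Definition W G J := cum (cum G) J.


Lemma lim_le (u v : nat -> R) (a b : R) : is_lim_seq u a -> is_lim_seq v b ->
  (exists N, forall n, (N <= n)%nat -> u n <= v n) -> a <= b.
Proof. intros Hu Hv [N HN]. assert (H := is_lim_seq_le_loc u v a b). simpl in H. apply H; auto.
 exists N. auto. Qed.

Lemma lim_cum (G : nat -> nat -> R) (g : nat -> R) J : (forall k, is_lim_seq (fun n => G n k) (g k)) ->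
  is_lim_seq (fun n => cum (G n) J) (cum g J).
Proof. intros H. induction J; simpl. apply H. apply (is_lim_seq_plus' _ _ _ _ IHJ (H (S J))). Qed.

Lemma lim_sh (G : nat -> nat -> R) (g : nat -> R) k : (forall k, is_lim_seq (fun n => G n k) (g k)) ->
  is_lim_seq (fun n => sh (G n) k) (sh g k).
Proof. intros H. destruct k; cbn [sh]. apply is_lim_seq_const. apply H. Qed.

Section Lim.
Variable lam : R.
Variable p : nat -> R.
Hypothesis Hl : 0 <= lam.
Hypothesis Hp : goodp p.
Hypothesis Hs : ex_series p.

Notation F n := (fin_pmf lam p n).
Notation h := (poisson_pmf lam).
Notation f := (ebs_pmf lam p).
Notation mu := (ebs_mean lam p).

Lemma h_nonneg : forall k, 0 <= h k.
Proof. intros; apply poisson_nonneg; auto. Qed.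

Lemma fin_le_cum n k : F n k <= cum h k.
Proof. revert k; induction n; intros k. simpl. destruct k; simpl; [lra|]. assert (0 <= cum h k) by (apply cum_nonneg, h_nonneg). lra.
 rewrite fin_S. destruct (Hp n). assert (sh (F n) k <= cum h k).
 { destruct k; cbn [sh]. apply cum_nonneg, h_nonneg. specialize (IHn k). assert (cum h k <= cum h (S k)) by (apply cum_mono; auto; apply h_nonneg). lra. }
 specialize (IHn k). nra. Qed.

Lemma sh_fin_bounds i k : 0 <= sh (F i) k <= cum h k.
Proof. destruct k as [|k]; cbn [sh]. split; [lra| apply cum_nonneg, h_nonneg].
 split. apply fin_nonneg; auto. apply Rle_trans with (cum h k). apply fin_le_cum. apply cum_mono. apply h_nonneg. lia. Qed.

Lemma ex_lim_fin k : ex_finite_lim_seq (fun n => F n k).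
Proof. set (u := fun n => F n k). set (d := fun i => u (S i) - u i).
 assert (Hd : ex_series d).
 { apply (@ex_series_le R_AbsRing R_CompleteNormedModule d (fun i => cum h k * p i)).
   - intros i. unfold d, u. rewrite fin_S. change norm with Rabs. simpl.
     assert (0 <= F i k) by (apply fin_nonneg; auto). assert (F i k <= cum h k) by apply fin_le_cum.
     assert (0 <= sh (F i) k <= cum h k).
     { apply sh_fin_bounds. }
     destruct (Hp i). 
     replace ((1 - p i) * F i k + p i * sh (F i) k - F i k) with (p i * (sh (F i) k - F i k)) by ring.
     rewrite Rabs_mult, Rabs_pos_eq by lra. rewrite Rmult_comm. apply Rmult_le_compat_r. lra.
     apply Rabs_le. lra.
   - apply (ex_series_scal_l (cum h k) p Hs). }
 destruct Hd as [l Hl'].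
 exists (u 0%nat + l). apply is_lim_seq_incr_1.
 apply is_lim_seq_ext with (fun n => u 0%nat + sum_n d n).
 - intros n. induction n. rewrite sum_O. unfold d. ring. rewrite sum_Sn. change plus with Rplus. rewrite <- Rplus_assoc, IHn. unfold d. ring.
 - apply is_lim_seq_plus'. apply is_lim_seq_const. exact Hl'. Qed.

Lemma lim_fin k : is_lim_seq (fun n => F n k) (f k).
Proof. destruct (ex_lim_fin k) as [l Hl']. unfold ebs_pmf. rewrite (is_lim_seq_unique _ _ Hl'). simpl. auto. Qed.

Lemma lim_shf k : is_lim_seq (fun n => sh (F n) k) (sh f k).
Proof. apply (lim_sh (fun n => F n) f k lim_fin). Qed.

Lemma sumi_sum_n n : sumi (S n) p = sum_n p n.
Proof. induction n. simpl. rewrite sum_O. ring. rewrite sum_Sn. change plus with Rplus. rewrite <- IHn. simpl. ring. Qed.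

Lemma lim_mu : is_lim_seq (fun n => lam + sumi n p) mu.
Proof. unfold ebs_mean. apply is_lim_seq_plus'. apply is_lim_seq_const.
 apply is_lim_seq_incr_1. apply is_lim_seq_ext with (sum_n p). intros; rewrite sumi_sum_n; auto.
 apply (Series_correct p Hs). Qed.

Lemma sumi_le_series n : sumi n p <= Series p.
Proof. apply (lim_le (fun _ => sumi n p) (fun m => sumi m p)). apply is_lim_seq_const.
 apply is_lim_seq_ext with (fun m => lam + sumi m p - lam). intros; ring.
 replace (Series p) with (mu - lam) by (unfold ebs_mean; ring). apply is_lim_seq_minus'. apply lim_mu. apply is_lim_seq_const.
 exists n. intros m Hm. induction Hm. lra. simpl. destruct (Hp m). lra. Qed.

Lemma mu_n_le n : lam + sumi n p <= mu.
Proof. unfold ebs_mean. assert (H := sumi_le_series n). lra. Qed.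

Lemma series_nonneg : 0 <= Series p.
Proof. assert (H := sumi_le_series 0). simpl in H. auto. Qed.

Lemma mu_eventually c : c < mu -> exists N, forall n, (N <= n)%nat -> c <= lam + sumi n p.
Proof. intros Hc. assert (H := lim_mu). apply is_lim_seq_spec in H.
 destruct (H (mkposreal (mu - c) ltac:(lra))) as [N HN]. exists N. intros n Hn. specialize (HN n Hn). simpl in HN.
 apply Rabs_lt_between in HN. lra. Qed.

Lemma L_nonneg k : 0 <= f k.
Proof. apply (lim_le (fun _ => 0) (fun n => F n k)). apply is_lim_seq_const. apply lim_fin. exists 0%nat. intros; apply fin_nonneg; auto. Qed.

Lemma L_shnonneg k : 0 <= sh f k.
Proof. destruct k; cbn [sh]. lra. apply L_nonneg. Qed.

Lemma L_Dstar j : mu <= INR j -> INR (S j) * f (S j) <= mu * f j.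
Proof. intros Hmu. apply (lim_le (fun n => INR (S j) * F n (S j)) (fun n => (lam + sumi n p) * F n j)).
 apply is_lim_seq_scal_l with (a := INR (S j)) (lu := f (S j)); apply lim_fin.
 apply is_lim_seq_mult'. apply lim_mu. apply lim_fin.
 exists 0%nat. intros n _. apply Dstar_fin; auto. assert (H := mu_n_le n). lra. Qed.

Lemma L_Dss j pb : 0 <= pb <= 1 -> (forall i, p i <= pb) -> mu + pb <= INR j + 1 ->
  INR (S j) * f (S j) <= (mu + pb) * f j.
Proof. intros Hpb Hle Hmu. apply (lim_le (fun n => INR (S j) * F n (S j)) (fun n => (lam + sumi n p + pb) * F n j)).
 apply is_lim_seq_scal_l with (a := INR (S j)) (lu := f (S j)); apply lim_fin.
 apply is_lim_seq_mult'. apply is_lim_seq_plus'. apply lim_mu. apply is_lim_seq_const. apply lim_fin.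
 exists 0%nat. intros n _. apply Dss_fin; auto. assert (H := mu_n_le n). lra. Qed.

Lemma L_Ustar k : INR k < mu -> mu * sh f k <= INR k * f k.
Proof. intros Hmu. apply (lim_le (fun n => (lam + sumi n p) * sh (F n) k) (fun n => INR k * F n k)).
 apply is_lim_seq_mult'. apply lim_mu. apply lim_shf.
 apply is_lim_seq_scal_l with (a := INR k) (lu := f k); apply lim_fin.
 destruct (mu_eventually (INR k) Hmu) as [N HN]. exists N. intros n Hn. apply Ustar_fin; auto. specialize (HN n Hn). lra. Qed.

Lemma L_U k : INR k < mu -> sh f k <= f k.
Proof. intros Hmu. apply (lim_le (fun n => sh (F n) k) (fun n => F n k)). apply lim_shf. apply lim_fin.
 destruct (mu_eventually (INR k) Hmu) as [N HN]. exists N. intros n Hn. apply U_fin; auto. specialize (HN n Hn). lra. Qed.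

Lemma W_mix a G J : W (fun k => (1 - a) * G k + a * sh G k) J = (1 - a) * W G J + a * sh (W G) J.
Proof. unfold W. rewrite (cum_ext _ (fun k => (1 - a) * cum G k + a * sh (cum G) k)) by (intros; apply cum_mix).
 rewrite cum_mix. auto. Qed.

Lemma W_h J : W h J = INR (S J) * cum h J - lam * sh (cum h) J.
Proof. induction J. unfold W; simpl; ring. unfold W in *. cbn [cum]. rewrite IHJ. cbn [sh]. assert (Ec := cum_sh h J). rewrite <- Ec.
 rewrite poisson_S. rewrite !S_INR. assert (INR J + 1 <> 0) by (assert (H := pos_INR J); lra). field. auto. Qed.

Lemma W_fin n J : W h J - sumi n p * cum h J <= W (F n) J.
Proof. revert J. induction n; intros J. cbn [sumi]. rewrite Rmult_0_l, Rminus_0_r. right; reflexivity.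
 unfold W. rewrite (cum_ext (cum (F (S n))) (cum (fun k => (1 - p n) * F n k + p n * sh (F n) k))).
 2:{ intros. apply cum_ext. intros. apply fin_S. }
 fold (W (fun k => (1 - p n) * F n k + p n * sh (F n) k) J). rewrite W_mix.
 assert (H1 := IHn J).
 assert (H2 : sh (W h) J - sumi n p * sh (cum h) J <= sh (W (F n)) J).
 { destruct J; cbn [sh]. lra. apply IHn. }
 assert (E : W h J - sh (W h) J = cum h J) by (destruct J; cbn [sh]; unfold W; simpl; ring).
 assert (Hc : sh (cum h) J <= cum h J) by (apply sh_le_cum, h_nonneg).
 assert (0 <= sumi n p) by (apply sumi_nonneg; intros; apply Hp).
 destruct (Hp n). cbn [sumi].
 assert (0 <= (1 - p n) * (W (F n) J - (W h J - sumi n p * cum h J))) by (apply Rmult_le_pos; lra).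
 assert (0 <= p n * (sh (W (F n)) J - (sh (W h) J - sumi n p * sh (cum h) J))) by (apply Rmult_le_pos; lra).
 assert (0 <= sumi n p * p n * (cum h J - sh (cum h) J)) by (apply Rmult_le_pos; [apply Rmult_le_pos|]; lra).
 change (cum (cum h) J) with (W h J). nra. Qed.

Lemma W_fin' n J : INR (S J) >= mu -> (INR (S J) - mu) * h 0%nat <= W (F n) J.
Proof. intros HJ. assert (H := W_fin n J). rewrite W_h in H.
 assert (Hc : sh (cum h) J <= cum h J) by (apply sh_le_cum, h_nonneg).
 assert (Hc0 : 0 <= sh (cum h) J) by (destruct J; cbn [sh]; [lra| apply cum_nonneg, h_nonneg]).
 assert (Hh : h 0%nat <= cum h J) by (apply cum_ge0, h_nonneg).
 assert (Hm := mu_n_le n).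
 assert (lam * sh (cum h) J <= lam * cum h J) by (apply Rmult_le_compat_l; auto).
 assert ((INR (S J) - mu) * h 0%nat <= (INR (S J) - mu) * cum h J) by (apply Rmult_le_compat_l; lra).
 assert ((INR (S J) - mu) * cum h J <= (INR (S J) - lam - sumi n p) * cum h J).
 { apply Rmult_le_compat_r. apply cum_nonneg, h_nonneg. lra. }
 lra. Qed.

Lemma L_W J : INR (S J) >= mu -> (INR (S J) - mu) * h 0%nat <= W f J.
Proof. intros HJ. apply (lim_le (fun _ => (INR (S J) - mu) * h 0%nat) (fun n => W (F n) J)).
 apply is_lim_seq_const. unfold W. apply lim_cum. intros k. apply lim_cum. intros; apply lim_fin.
 exists 0%nat. intros; apply W_fin'; auto. Qed.

Lemma L_pos J : INR (S J) > mu -> exists j, (j <= J)%nat /\ 0 < f j.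
Proof. intros HJ. destruct (classic (exists j, (j <= J)%nat /\ 0 < f j)) as [H|H]; auto. exfalso.
 assert (Hz : forall j, (j <= J)%nat -> f j = 0).
 { intros j Hj. assert (0 <= f j) by apply L_nonneg. destruct (Rlt_dec 0 (f j)). exfalso; apply H; exists j; auto. lra. }
 assert (Hc : forall m, (m <= J)%nat -> cum f m = 0).
 { induction m; intros Hm; simpl. apply Hz; lia. rewrite IHm by lia. rewrite Hz by lia. ring. }
 assert (HW : forall m, (m <= J)%nat -> cum (cum f) m = 0).
 { induction m; intros Hm. simpl. apply Hz; lia. rewrite cumS. rewrite IHm by lia. rewrite Hc by lia. ring. }
 assert (H1 := L_W J ltac:(lra)). unfold W in H1. rewrite HW in H1 by lia.
 assert (0 < h 0%nat) by (unfold poisson_pmf; simpl; rewrite Rmult_1_r; unfold Rdiv; rewrite Rinv_1, Rmult_1_r; apply exp_pos).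
 assert (0 < (INR (S J) - mu) * h 0%nat) by (apply Rmult_lt_0_compat; lra). lra. Qed.

End Lim.

Definition epsN (N : nat) : R := / (INR N + 1).

Lemma epsN_pos N : 0 < epsN N.
Proof. unfold epsN. apply Rinv_0_lt_compat. assert (H := pos_INR N). lra. Qed.

Lemma lim_epsN : is_lim_seq epsN 0.
Proof. assert (H := is_lim_seq_inv INR p_infty is_lim_seq_INR ltac:(discriminate)). simpl in H.
 apply (is_lim_seq_incr_1 (fun N => / INR N)) in H.
 apply is_lim_seq_ext with (fun N => / INR (S N)); auto. intros; unfold epsN; rewrite S_INR; auto. Qed.

Definition Eerr lam e k := cum (fun m => Rabs (poisson_pmf (lam + e) m - poisson_pmf lam m)) k.

Lemma term_le_cum G k : (forall x, 0 <= G x) -> G k <= cum G k.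
Proof. intros H. destruct k. simpl; lra. rewrite cumS. assert (0 <= cum G k) by (apply cum_nonneg; auto). lra. Qed.

Lemma Eerr_nonneg lam e k : 0 <= Eerr lam e k.
Proof. apply cum_nonneg. intros; apply Rabs_pos. Qed.

Lemma pert_fin lam e p n k : goodp p ->
  Rabs (fin_pmf (lam + e) p n k - fin_pmf lam p n k) <= Eerr lam e k.
Proof. intros Hp. revert k. induction n; intros k.
 - simpl. apply (term_le_cum (fun m => Rabs (poisson_pmf (lam + e) m - poisson_pmf lam m))). intros; apply Rabs_pos.
 - rewrite !fin_S. destruct (Hp n).
   assert (H1 := IHn k).
   assert (H2 : Rabs (sh (fin_pmf (lam + e) p n) k - sh (fin_pmf lam p n) k) <= Eerr lam e k).
   { destruct k; cbn [sh]. rewrite Rminus_0_r, Rabs_R0. apply Eerr_nonneg.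
     apply Rle_trans with (Eerr lam e k). apply IHn. unfold Eerr. apply cum_mono. intros; apply Rabs_pos. lia. }
   replace ((1 - p n) * fin_pmf (lam + e) p n k + p n * sh (fin_pmf (lam + e) p n) k -
     ((1 - p n) * fin_pmf lam p n k + p n * sh (fin_pmf lam p n) k)) with
     ((1 - p n) * (fin_pmf (lam + e) p n k - fin_pmf lam p n k) + p n * (sh (fin_pmf (lam + e) p n) k - sh (fin_pmf lam p n) k)) by ring.
   eapply Rle_trans. apply Rabs_triang. rewrite !Rabs_mult, !(Rabs_pos_eq (1 - p n)), !(Rabs_pos_eq (p n)) by lra.
   assert ((1 - p n) * Rabs (fin_pmf (lam + e) p n k - fin_pmf lam p n k) <= (1 - p n) * Eerr lam e k) by (apply Rmult_le_compat_l; lra).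
   assert (p n * Rabs (sh (fin_pmf (lam + e) p n) k - sh (fin_pmf lam p n) k) <= p n * Eerr lam e k) by (apply Rmult_le_compat_l; lra).
   lra. Qed.

Lemma pert_lim lam e p k : 0 <= lam -> 0 <= e -> goodp p -> ex_series p ->
  Rabs (ebs_pmf (lam + e) p k - ebs_pmf lam p k) <= Eerr lam e k.
Proof. intros Hl He Hp Hs. apply Rabs_le. split.
 - apply (lim_le (fun _ => - Eerr lam e k) (fun n => fin_pmf (lam + e) p n k - fin_pmf lam p n k)).
   apply is_lim_seq_const. apply is_lim_seq_minus'; apply lim_fin; auto; lra.
   exists 0%nat. intros n _. assert (H := pert_fin lam e p n k Hp). apply Rabs_le_between in H. lra.
 - apply (lim_le (fun n => fin_pmf (lam + e) p n k - fin_pmf lam p n k) (fun _ => Eerr lam e k)).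
   apply is_lim_seq_minus'; apply lim_fin; auto; lra. apply is_lim_seq_const.
   exists 0%nat. intros n _. assert (H := pert_fin lam e p n k Hp). apply Rabs_le_between in H. lra. Qed.

Lemma cum_zero k : cum (fun _ => 0) k = 0.
Proof. induction k; simpl; auto. rewrite IHk; ring. Qed.

Lemma lim_Eerr lam k : is_lim_seq (fun N => Eerr lam (epsN N) k) 0.
Proof. rewrite <- (cum_zero k). unfold Eerr.
 apply (lim_cum (fun N m => Rabs (poisson_pmf (lam + epsN N) m - poisson_pmf lam m)) (fun _ => 0) k).
 intros m. apply -> is_lim_seq_abs_0. replace 0 with (poisson_pmf lam m - poisson_pmf lam m) by ring.
 apply is_lim_seq_minus'; [|apply is_lim_seq_const].
 apply (is_lim_seq_continuous (fun y => poisson_pmf y m) (fun N => lam + epsN N) lam).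
 unfold poisson_pmf. reg. assert (H := is_lim_seq_plus' _ _ lam 0 (is_lim_seq_const lam) lim_epsN).
 rewrite Rplus_0_r in H. exact H. Qed.

Lemma lim_pert lam p k : 0 <= lam -> goodp p -> ex_series p ->
  is_lim_seq (fun N => ebs_pmf (lam + epsN N) p k) (ebs_pmf lam p k).
Proof. intros Hl Hp Hs.
 apply is_lim_seq_le_le with (fun N => ebs_pmf lam p k - Eerr lam (epsN N) k) (fun N => ebs_pmf lam p k + Eerr lam (epsN N) k).
 - intros N. assert (H := pert_lim lam (epsN N) p k Hl (Rlt_le _ _ (epsN_pos N)) Hp Hs). apply Rabs_le_between in H. lra.
 - replace (Finite (ebs_pmf lam p k)) with (Finite (ebs_pmf lam p k - 0)) by (f_equal; ring).
   apply is_lim_seq_minus'. apply is_lim_seq_const. apply lim_Eerr.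
 - replace (Finite (ebs_pmf lam p k)) with (Finite (ebs_pmf lam p k + 0)) by (f_equal; ring).
   apply is_lim_seq_plus'. apply is_lim_seq_const. apply lim_Eerr. Qed.

Lemma lim_pert_sh lam p k : 0 <= lam -> goodp p -> ex_series p ->
  is_lim_seq (fun N => sh (ebs_pmf (lam + epsN N) p) k) (sh (ebs_pmf lam p) k).
Proof. intros. apply (lim_sh (fun N => ebs_pmf (lam + epsN N) p)). intros; apply lim_pert; auto. Qed.

Lemma sumi_sum_n_gen q n : sumi (S n) q = sum_n q n.
Proof. induction n. simpl. rewrite sum_O. ring. rewrite sum_Sn. change plus with Rplus. rewrite <- IHn. simpl. ring. Qed.

Lemma is_series_zat p i : ex_series p -> is_series (zat i p) (Series p - p i).
Proof. intros Hs. assert (H : is_lim_seq (sum_n (zat i p)) (Series p - p i)).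
 { apply is_lim_seq_ext_loc with (fun N => sum_n p N - p i).
   - exists i. intros N HN. rewrite <- !sumi_sum_n_gen. rewrite sumi_zat; auto. lia.
   - apply is_lim_seq_minus'. apply (Series_correct p Hs). apply is_lim_seq_const. }
 exact H. Qed.

Lemma ex_series_zat p i : ex_series p -> ex_series (zat i p).
Proof. intros Hs. exists (Series p - p i). apply is_series_zat; auto. Qed.

Lemma Series_zat p i : ex_series p -> Series (zat i p) = Series p - p i.
Proof. intros Hs. apply is_series_unique. apply is_series_zat; auto. Qed.

Lemma mean_zat lam p i : ex_series p -> ebs_mean lam (zat i p) = ebs_mean lam p - p i.
Proof. intros. unfold ebs_mean. rewrite Series_zat; auto. ring. Qed.

Lemma drop_zat p x : drop_first p x = zat 0 p x.
Proof. destruct x; reflexivity. Qed.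

Lemma is_series_drop p : ex_series p -> is_series (drop_first p) (Series p - p 0%nat).
Proof. intros Hs. apply is_series_ext with (zat 0 p). intros; rewrite drop_zat; auto. apply is_series_zat; auto. Qed.

Lemma N2_fixed lam e p i k : 0 <= lam -> 0 < e -> goodp p -> ex_series p -> ebs_mean lam p = INR k ->
  p i ^ 2 * (sh (ebs_pmf (lam + e) (zat i p)) k - sh (sh (ebs_pmf (lam + e) (zat i p))) k)
  <= INR k * ebs_pmf (lam + e) p k - (ebs_mean lam p + e) * sh (ebs_pmf (lam + e) p) k.
Proof. intros Hl He Hp Hs Hmu. assert (Hl' : 0 <= lam + e) by lra.
 assert (Hpz := goodp_zat i p Hp). assert (Hsz := ex_series_zat p i Hs).
 apply (lim_le (fun n => p i ^ 2 * (sh (fin_pmf (lam + e) (zat i p) n) k - sh (sh (fin_pmf (lam + e) (zat i p) n)) k))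
              (fun n => INR k * fin_pmf (lam + e) p n k - (lam + e + sumi n p) * sh (fin_pmf (lam + e) p n) k)).
 - apply is_lim_seq_scal_l with (a := p i ^ 2) (lu := Finite (sh (ebs_pmf (lam + e) (zat i p)) k - sh (sh (ebs_pmf (lam + e) (zat i p))) k)).
   apply is_lim_seq_minus'. apply lim_shf; auto.
   apply (lim_sh (fun n => sh (fin_pmf (lam + e) (zat i p) n)) (sh (ebs_pmf (lam + e) (zat i p)))). intros; apply lim_shf; auto.
 - apply is_lim_seq_minus'. apply is_lim_seq_scal_l with (a := INR k) (lu := Finite (ebs_pmf (lam + e) p k)). apply lim_fin; auto.
   replace (ebs_mean lam p + e) with (ebs_mean (lam + e) p) by (unfold ebs_mean; ring).
   apply is_lim_seq_mult'. apply lim_mu; auto. apply lim_shf; auto.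
 - destruct (mu_eventually (lam + e) p Hs (INR k)) as [N0 HN0].
   { unfold ebs_mean in *. lra. }
   exists (max N0 (S i)). intros n Hn. apply Ustar_single; auto. specialize (HN0 n ltac:(lia)). lra. lia. Qed.

Lemma N2 lam p i k : 0 <= lam -> goodp p -> ex_series p -> ebs_mean lam p = INR k ->
  p i ^ 2 * (sh (ebs_pmf lam (zat i p)) k - sh (sh (ebs_pmf lam (zat i p))) k)
  <= INR k * ebs_pmf lam p k - INR k * sh (ebs_pmf lam p) k.
Proof. intros Hl Hp Hs Hmu.
 assert (Hpz := goodp_zat i p Hp). assert (Hsz := ex_series_zat p i Hs).
 apply (lim_le (fun N => p i ^ 2 * (sh (ebs_pmf (lam + epsN N) (zat i p)) k - sh (sh (ebs_pmf (lam + epsN N) (zat i p))) k))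
   (fun N => INR k * ebs_pmf (lam + epsN N) p k - (ebs_mean lam p + epsN N) * sh (ebs_pmf (lam + epsN N) p) k)).
 - apply is_lim_seq_scal_l with (a := p i ^ 2) (lu := Finite (sh (ebs_pmf lam (zat i p)) k - sh (sh (ebs_pmf lam (zat i p))) k)).
   apply is_lim_seq_minus'. apply lim_pert_sh; auto.
   apply (lim_sh (fun N => sh (ebs_pmf (lam + epsN N) (zat i p))) (sh (ebs_pmf lam (zat i p)))). intros; apply lim_pert_sh; auto.
 - replace (INR k * ebs_pmf lam p k - INR k * sh (ebs_pmf lam p) k) with
     (INR k * ebs_pmf lam p k - (ebs_mean lam p + 0) * sh (ebs_pmf lam p) k) by (rewrite Hmu; ring).
   apply is_lim_seq_minus'. apply is_lim_seq_scal_l with (a := INR k) (lu := Finite (ebs_pmf lam p k)). apply lim_pert; auto.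
   apply is_lim_seq_mult'. apply is_lim_seq_plus'. apply is_lim_seq_const. apply lim_epsN. apply lim_pert_sh; auto.
 - exists 0%nat. intros N _. apply N2_fixed; auto. apply epsN_pos. Qed.

Definition lead (f : nat -> R) m := sh f m <= f m /\ f (S m) < f m.

Lemma lead_iff lam p m : is_lead_mode lam p m <-> lead (ebs_pmf lam p) m.
Proof. unfold is_lead_mode, lead, ebs_pmf_pred. destruct m; cbn [sh]; tauto. Qed.

Lemma argmax (f : nat -> R) K : exists m, (m <= K)%nat /\ (forall i, (i <= K)%nat -> f i <= f m) /\
  (forall i, (m < i)%nat -> (i <= K)%nat -> f i < f m).
Proof. induction K.
 - exists 0%nat. split; [lia|]. split. intros i Hi; replace i with 0%nat by lia; lra. intros; lia.
 - destruct IHK as [m [Hm [H1 H2]]]. destruct (Rle_dec (f m) (f (S K))).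
   + exists (S K). split; [lia|]. split. intros i Hi. destruct (Nat.eq_dec i (S K)). subst; lra.
     assert (f i <= f m) by (apply H1; lia). lra. intros; lia.
   + exists m. split; [lia|]. split. intros i Hi. destruct (Nat.eq_dec i (S K)). subst; lra. apply H1; lia.
     intros i Hi1 Hi2. destruct (Nat.eq_dec i (S K)). subst; lra. apply H2; lia. Qed.

Section GL.
Variable f : nat -> R.
Hypothesis Hf : forall x, 0 <= f x.
Variable c : R.
Variable J0 : nat.
Hypothesis Hc : 0 <= c.
Hypothesis Hdec : forall j, (J0 <= j)%nat -> INR (S j) * f (S j) <= c * f j.
Hypothesis HcJ : c < INR (S J0).

Lemma GL1 m : lead f m -> (m <= J0)%nat.
Proof. intros [H1 H2]. destruct (le_lt_dec m J0); auto. exfalso. destruct m as [|j]; [lia|].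
 cbn [sh] in H1. assert (Hj := Hdec j ltac:(lia)). assert (0 <= f (S (S j))) by apply Hf.
 assert (INR (S J0) <= INR (S j)) by (apply le_INR; lia).
 assert (c * f j <= c * f (S j)) by (apply Rmult_le_compat_l; lra).
 assert (c * f (S j) < INR (S j) * f (S j)) by (apply Rmult_lt_compat_r; lra). lra. Qed.

Lemma GL2 : (exists j, 0 < f j) -> exists m, lead f m.
Proof. intros [j0 Hj0]. assert (HS : 0 < INR (S J0)) by (apply lt_0_INR; lia).
 set (K := max J0 j0). destruct (argmax f K) as [m [Hm [H1 H2]]].
 assert (Hfm : 0 < f m) by (assert (f j0 <= f m) by (apply H1; lia); lra).
 exists m. split.
 - destruct m; cbn [sh]. lra. apply H1; lia.
 - destruct (le_lt_dec (S m) K). apply H2; lia. assert (m = K) by lia.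
   assert (Hd := Hdec m ltac:(lia)). assert (INR (S J0) <= INR (S m)) by (apply le_INR; lia).
   assert (c * f m < INR (S J0) * f m) by (apply Rmult_lt_compat_r; lra).
   assert (0 <= f (S m)) by apply Hf.
   assert (INR (S J0) * f (S m) <= INR (S m) * f (S m)) by (apply Rmult_le_compat_r; lra).
   assert (INR (S J0) * f (S m) < INR (S J0) * f m) by lra.
   apply (Rmult_lt_reg_l (INR (S J0))); lra. Qed.
End GL.

Lemma GL3 (f : nat -> R) k m : (forall m, (m < k)%nat -> f m <= f (S m)) -> lead f m -> (k <= m)%nat.
Proof. intros H [H1 H2]. destruct (le_lt_dec k m); auto. specialize (H m l). lra. Qed.

Lemma mono_chain (f : nat -> R) K : (forall m, (m < K)%nat -> f m <= f (S m)) -> forall j, (j <= K)%nat -> f j <= f K.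
Proof. induction K; intros H j Hj. replace j with 0%nat by lia; lra.
 destruct (Nat.eq_dec j (S K)). subst; lra. assert (f j <= f K) by (apply IHK; [intros; apply H; lia| lia]).
 assert (f K <= f (S K)) by (apply H; lia). lra. Qed.

Lemma m_plus_spec lam p : (exists m, lead (ebs_pmf lam p) m) -> lead (ebs_pmf lam p) (m_plus lam p).
Proof. intros [m Hm]. apply lead_iff. unfold m_plus. apply epsilon_spec. exists m. apply lead_iff; auto. Qed.

Lemma m_minus_cases lam p :
  (sh (ebs_pmf lam p) (m_plus lam p) = ebs_pmf lam p (m_plus lam p) /\ m_minus lam p = (m_plus lam p - 1)%nat) \/
  (sh (ebs_pmf lam p) (m_plus lam p) <> ebs_pmf lam p (m_plus lam p) /\ m_minus lam p = m_plus lam p).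
Proof. unfold m_minus. cbv zeta. destruct (excluded_middle_informative _) as [H|H]; [left|right]; split; try reflexivity;
 unfold ebs_pmf_pred in H; destruct (m_plus lam p); cbn [sh] in *; auto. Qed.

Lemma m_plus_unique lam p k : (exists m, lead (ebs_pmf lam p) m) -> (forall m, lead (ebs_pmf lam p) m -> m = k) -> m_plus lam p = k.
Proof. intros He Hu. apply Hu. apply m_plus_spec; auto. Qed.

Definition ind (a : nat) : nat -> R := fun i => if Nat.ltb i a then 1 else 0.

Lemma fin_ind_le lam p a n j : (forall i, p i = ind a i) -> (n <= a)%nat ->
  fin_pmf lam p n j = if Nat.ltb j n then 0 else poisson_pmf lam (j - n).
Proof. intros Hpi. revert j. induction n; intros j Hn.
 - simpl. rewrite Nat.sub_0_r. destruct (Nat.ltb_spec j 0); [lia|auto].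
 - rewrite fin_S. rewrite Hpi. unfold ind. destruct (Nat.ltb_spec n a); [|lia].
   destruct j; cbn [sh]. destruct (Nat.ltb_spec 0 (S n)); [ring|lia].
   rewrite (IHn j) by lia. replace (S j - S n)%nat with (j - n)%nat by lia. destruct (Nat.ltb_spec j n), (Nat.ltb_spec (S j) (S n)); try lia; ring. Qed.

Lemma fin_ind_ge lam p a n j : (forall i, p i = ind a i) -> (a <= n)%nat -> fin_pmf lam p n j = fin_pmf lam p a j.
Proof. intros Hpi Hn. induction Hn; auto. rewrite fin_S, Hpi. unfold ind. destruct (Nat.ltb_spec m a); [lia|].
 destruct j; cbn [sh]; rewrite IHHn; ring. Qed.

Lemma ebs_ind lam p a j : (forall i, p i = ind a i) ->
  ebs_pmf lam p j = if Nat.ltb j a then 0 else poisson_pmf lam (j - a).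
Proof. intros Hpi. unfold ebs_pmf.
 set (v := if Nat.ltb j a then 0 else poisson_pmf lam (j - a)).
 assert (H : is_lim_seq (fun n => fin_pmf lam p n j) v).
 { apply is_lim_seq_ext_loc with (fun _ => v).
   - exists a. intros n Hn. rewrite (fin_ind_ge lam p a n j Hpi Hn). rewrite (fin_ind_le lam p a a j Hpi); auto.
   - apply is_lim_seq_const. }
 rewrite (is_lim_seq_unique _ _ H). auto. Qed.

Lemma sumi_ind a n : sumi n (ind a) = INR (min n a).
Proof. induction n. simpl. auto. cbn [sumi]. rewrite IHn. unfold ind. destruct (Nat.ltb_spec n a).
 - replace (min (S n) a) with (S (min n a)) by lia. rewrite S_INR. ring.
 - replace (min (S n) a) with (min n a) by lia. ring. Qed.

Lemma is_series_ind a : is_series (ind a) (INR a).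
Proof. assert (H : is_lim_seq (sum_n (ind a)) (INR a)).
 { apply is_lim_seq_ext_loc with (fun _ => INR a). exists a. intros n Hn. rewrite <- sumi_sum_n_gen, sumi_ind.
   f_equal. lia. apply is_lim_seq_const. } exact H. Qed.

Lemma Series_ind p a : (forall i, p i = ind a i) -> Series p = INR a.
Proof. intros H. apply is_series_unique. apply is_series_ext with (ind a). intros; auto. apply is_series_ind. Qed.

Lemma extract_ind (p : nat -> R) : (forall i, p i = 0 \/ p i = 1) -> (forall i, p (S i) <= p i) -> is_lim_seq p 0 ->
  exists a, forall i, p i = ind a i.
Proof. intros H01 Hdec Hlim. apply is_lim_seq_spec in Hlim. destruct (Hlim (mkposreal (1/2) ltac:(lra))) as [N HN].
 specialize (HN N (Nat.le_refl N)). simpl in HN. assert (HpN : p N = 0).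
 { destruct (H01 N) as [->|E]; auto. rewrite E in HN. rewrite Rminus_0_r, Rabs_R1 in HN. lra. }
 assert (Hl : forall M, (exists a, (a <= M)%nat /\ p a = 0 /\ forall i, (i < a)%nat -> p i = 1) \/ (forall i, (i <= M)%nat -> p i = 1)).
 { induction M.
   - destruct (H01 0%nat). left. exists 0%nat. repeat split; auto; intros; lia. right. intros i Hi. replace i with 0%nat by lia; auto.
   - destruct IHM as [[a [Ha [Hpa Hi]]]|Hall]. left. exists a. repeat split; auto.
     destruct (H01 (S M)). left. exists (S M). repeat split; auto. intros; apply Hall; lia.
     right. intros i Hi. destruct (Nat.eq_dec i (S M)). subst; auto. apply Hall; lia. }
 destruct (Hl N) as [[a [Ha [Hpa Hi]]]|Hall].
 - exists a. intros i. unfold ind. destruct (Nat.ltb_spec i a). apply Hi; auto.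
   assert (Hc : forall j, (a <= j)%nat -> p j <= p a). { intros j Hj. induction Hj. lra. specialize (Hdec m). lra. }
   specialize (Hc i H). destruct (H01 i); auto. lra.
 - specialize (Hall N (Nat.le_refl N)). lra. Qed.

Section Main.
Variable lam : R.
Variable p : nat -> R.
Hypothesis Hl : 0 <= lam.
Hypothesis Hp : goodp p.
Hypothesis Hs : ex_series p.
Hypothesis Hdec : forall i, p (S i) <= p i.

Notation f := (ebs_pmf lam p).
Notation mu := (ebs_mean lam p).

Lemma mu_ge0 : 0 <= mu.
Proof. unfold ebs_mean. assert (H := series_nonneg lam p Hp Hs). lra. Qed.

Lemma p_le_p0 i : p i <= p 0%nat.
Proof. induction i. lra. specialize (Hdec i). lra. Qed.

Lemma part1 k : INR k < mu < INR k + 1 ->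
  (m_plus lam (drop_first p) <= k)%nat /\ (k <= m_minus lam p)%nat /\
  (m_minus lam p <= m_plus lam p)%nat /\ (m_plus lam p <= k + 1)%nat.
Proof. intros [Hk1 Hk2].
 assert (Hf := L_nonneg lam p Hl Hp Hs). assert (Hmu0 := mu_ge0).
 assert (HD : forall j, (S k <= j)%nat -> INR (S j) * f (S j) <= mu * f j).
 { intros j Hj. apply L_Dstar; auto. assert (INR (S k) <= INR j) by (apply le_INR; auto). rewrite S_INR in H. lra. }
 assert (HcJ : mu < INR (S (S k))) by (rewrite !S_INR; assert (H := pos_INR k); lra).
 assert (Hup := GL1 f Hf mu (S k) Hmu0 HD HcJ).
 assert (Hex : exists m, lead f m).
 { apply (GL2 f Hf mu (S k) HD HcJ). destruct (L_pos lam p Hl Hp Hs (S k)) as [j [_ Hj]]. lra. exists j; auto. }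
 assert (Hlow : forall m, lead f m -> (k <= m)%nat).
 { intros m. apply GL3. intros m' Hm'. assert (H := L_U lam p Hl Hp Hs (S m')). cbn [sh] in H. apply H.
   assert (INR (S m') <= INR k) by (apply le_INR; lia). lra. }
 assert (Htie : lead f k -> sh f k <> f k).
 { intros [H1 H2] Heq. assert (HfS : 0 <= f (S k)) by apply Hf.
   destruct k as [|k']. cbn [sh] in Heq. lra.
   assert (H := L_Ustar lam p Hl Hp Hs (S k') ltac:(lra)). cbn [sh] in H, Heq. rewrite <- Heq in H.
   assert (Hfk : 0 <= f k') by apply Hf. assert (f k' = 0) by nra. lra. }
 assert (Hm := m_plus_spec lam p Hex).
 assert (Hm1 := Hup _ Hm). assert (Hm2 := Hlow _ Hm).
 assert (Hdrop : (m_plus lam (drop_first p) <= k)%nat).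
 { set (q := drop_first p).
   assert (Hq : goodp q). { intros [|i]; simpl. lra. apply Hp. }
   assert (Hsq : ex_series q) by (exists (Series p - p 0%nat); apply is_series_drop; auto).
   assert (Hmq : ebs_mean lam q = mu - p 0%nat).
   { unfold ebs_mean, q. rewrite (is_series_unique _ _ (is_series_drop p Hs)). ring. }
   assert (Hqle : forall i, q i <= p 0%nat). { intros [|i]; simpl. apply Hp. apply p_le_p0. }
   assert (Hg := L_nonneg lam q Hl Hq Hsq).
   assert (HDq : forall j, (k <= j)%nat -> INR (S j) * ebs_pmf lam q (S j) <= mu * ebs_pmf lam q j).
   { intros j Hj. assert (H := L_Dss lam q Hl Hq Hsq j (p 0%nat) (Hp 0%nat) Hqle).
     rewrite Hmq in H. replace (mu - p 0%nat + p 0%nat) with mu in H by ring. apply H.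
     assert (INR k <= INR j) by (apply le_INR; auto). lra. }
   assert (HcJq : mu < INR (S k)) by (rewrite S_INR; lra).
   assert (Hexq : exists m, lead (ebs_pmf lam q) m).
   { apply (GL2 _ Hg mu k HDq HcJq). destruct (L_pos lam q Hl Hq Hsq (S k)) as [j [_ Hj]].
     rewrite Hmq. destruct (Hp 0%nat). lra. exists j; auto. }
   apply (GL1 _ Hg mu k Hmu0 HDq HcJq). apply m_plus_spec; auto. }
 destruct (m_minus_cases lam p) as [[Heq Hmm]|[Hne Hmm]]; rewrite Hmm.
 - assert (m_plus lam p <> k) by (intros E; rewrite E in Hm, Heq; apply (Htie Hm Heq)).
   repeat split; auto; lia.
 - repeat split; auto; lia. Qed.

Lemma part2_gen k : mu = INR k -> sh f k <= f k ->
  (sh f k < f k -> m_plus lam p = k /\ m_minus lam p = k) /\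
  (sh f k = f k -> m_plus lam p = k /\ m_minus lam p = (k - 1)%nat).
Proof. intros Hmu Hsk.
 assert (Hf := L_nonneg lam p Hl Hp Hs). assert (Hmu0 := mu_ge0).
 assert (HD : forall j, (k <= j)%nat -> INR (S j) * f (S j) <= mu * f j).
 { intros j Hj. apply L_Dstar; auto. rewrite Hmu. apply le_INR; auto. }
 assert (HcJ : mu < INR (S k)) by (rewrite S_INR; lra).
 assert (Hex : exists m, lead f m).
 { apply (GL2 f Hf mu k HD HcJ). destruct (L_pos lam p Hl Hp Hs k) as [j [_ Hj]]. lra. exists j; auto. }
 assert (Huniq : forall m, lead f m -> m = k).
 { intros m Hm. assert (H1 := GL1 f Hf mu k Hmu0 HD HcJ m Hm). destruct Hm as [Hm1 Hm2].
   destruct (Nat.eq_dec m k); auto. exfalso.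
   destruct (Nat.eq_dec (S m) k).
   - subst k. cbn [sh] in Hsk. lra.
   - assert (H := L_U lam p Hl Hp Hs (S m)). cbn [sh] in H.
     assert (INR (S m) < INR k) by (apply lt_INR; lia). specialize (H ltac:(lra)). lra. }
 assert (Hmp : m_plus lam p = k) by (apply m_plus_unique; auto).
 split; intros Hc; split; auto; destruct (m_minus_cases lam p) as [[Heq Hmm]|[Hne Hmm]]; rewrite Hmm, Hmp in *; auto.
 - lra.
 - exfalso; auto. Qed.

Lemma NE_strict k : mu = INR k ->
  ~ (exists a : nat, (1 <= k)%nat /\ (a < k)%nat /\ lam = INR k - INR a /\
          (forall i, p i = if Nat.ltb i a then 1 else 0)) -> sh f k < f k.
Proof. intros Hmu HNE. destruct (classic (exists i, 0 < p i < 1)) as [[i [Hi0 Hi1]]|Hno].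
 - assert (Hpi : p i <= mu).
   { assert (H1 := sumi_le_series lam p Hp Hs (S i)). assert (H2 := sumi_single (S i) i p ltac:(lia) ltac:(intros; apply Hp)).
     unfold ebs_mean. lra. }
   destruct k as [|k']. simpl in Hmu. lra.
   set (g := ebs_pmf lam (zat i p)).
   assert (Hpz := goodp_zat i p Hp). assert (Hsz := ex_series_zat p i Hs).
   assert (Hmg : ebs_mean lam (zat i p) = INR (S k') - p i) by (rewrite mean_zat; auto; lra).
   assert (Hg := L_nonneg lam (zat i p) Hl Hpz Hsz).
   assert (Hclaim : sh g k' < g k').
   { destruct (Rlt_dec 0 (sh g k')) as [Hpos|Hz].
     - destruct k' as [|k'']. cbn [sh] in Hpos. lra.
       assert (Hpre : INR (S k'') < ebs_mean lam (zat i p)) by (rewrite Hmg; rewrite (S_INR (S k'')); lra).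
       assert (H := L_Ustar lam (zat i p) Hl Hpz Hsz (S k'') Hpre). rewrite Hmg in H. fold g in H.
       rewrite !S_INR in H.
       assert (0 < INR k'' + 1) by (assert (H' := pos_INR k''); lra).
       assert ((INR k'' + 1) * sh g (S k'') < (INR k'' + 1 + 1 - p i) * sh g (S k'')) by (apply Rmult_lt_compat_r; lra).
       assert ((INR k'' + 1) * sh g (S k'') < (INR k'' + 1) * g (S k'')) by lra.
       apply (Rmult_lt_reg_l (INR k'' + 1)); lra.
     - assert (Hsh0 : sh g k' = 0) by (assert (H := L_shnonneg lam (zat i p) Hl Hpz Hsz k'); fold g in H; lra).
       destruct (L_pos lam (zat i p) Hl Hpz Hsz k') as [j [Hj Hgj]]. rewrite Hmg; lra.
       assert (Hmono : forall m, (m < k')%nat -> g m <= g (S m)).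
       { intros m Hm. assert (H := L_U lam (zat i p) Hl Hpz Hsz (S m)). cbn [sh] in H. apply H.
         rewrite Hmg. assert (INR (S m) <= INR k') by (apply le_INR; lia). assert (INR (S k') = INR k' + 1) by apply S_INR. lra. }
       assert (H := mono_chain g k' Hmono j Hj). fold g in Hgj. lra. }
   assert (HN := N2 lam p i (S k') Hl Hp Hs Hmu).
   change (sh (ebs_pmf lam (zat i p)) (S k')) with (g k') in HN.
   change (sh (sh (ebs_pmf lam (zat i p))) (S k')) with (sh g k') in HN.
   assert (0 < p i ^ 2 * (g k' - sh g k')) by (apply Rmult_lt_0_compat; [apply pow_lt; lra | lra]).
   assert (0 < INR (S k')) by (apply lt_0_INR; lia).
   assert (Hpos : 0 < INR (S k') * f (S k') - INR (S k') * sh f (S k')) by lra.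
   destruct (Rle_dec (f (S k') - sh f (S k')) 0) as [Hle|Hle]; [|lra].
   assert (INR (S k') * (f (S k') - sh f (S k')) <= 0) by nra.
   lra.
 - assert (H01 : forall i, p i = 0 \/ p i = 1).
   { intros i. destruct (Hp i). destruct (Rlt_dec 0 (p i)). destruct (Rlt_dec (p i) 1).
     exfalso; apply Hno; exists i; auto. right; lra. left; lra. }
   destruct (extract_ind p H01 Hdec (ex_series_lim_0 p Hs)) as [a Ha].
   assert (HSa := Series_ind p a Ha). unfold ebs_mean in Hmu. rewrite HSa in Hmu.
   destruct (Rlt_dec 0 lam) as [Hlp|Hl0].
   + exfalso. apply HNE. exists a.
     assert (INR a < INR k) by lra. assert (Hak : (a < k)%nat) by (apply INR_lt; auto).
     repeat split; try lia; try lra. intros i. rewrite Ha. reflexivity.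
   + assert (Hl0' : lam = 0) by lra.
     assert (a = k) by (apply INR_eq; lra). subst a.
     assert (Hfk : f k = 1).
     { rewrite (ebs_ind lam p k k Ha). destruct (Nat.ltb_spec k k); [lia|]. rewrite Nat.sub_diag.
       unfold poisson_pmf. rewrite Hl0'. simpl. rewrite Ropp_0, exp_0. field. }
     assert (Hsh : sh f k = 0).
     { destruct k as [|k']; cbn [sh]. auto. rewrite (ebs_ind lam p (S k') k' Ha). destruct (Nat.ltb_spec k' (S k')); [auto|lia]. }
     lra. Qed.
End Main.

Theorem theorem2 (lam : R) (p : nat -> R) (Hnabla : in_nabla lam p) :
  (forall k : nat,
     INR k < ebs_mean lam p < INR k + 1 ->
     (m_plus lam (drop_first p) <= k)%nat /\ (k <= m_minus lam p)%nat /\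
     (m_minus lam p <= m_plus lam p)%nat /\ (m_plus lam p <= k + 1)%nat) /\
  (forall k : nat,
     ebs_mean lam p = INR k ->
     ((~ exists a : nat, (1 <= k)%nat /\ (a < k)%nat /\ lam = INR k - INR a /\
          (forall i, p i = if Nat.ltb i a then 1 else 0)) ->
        m_plus lam p = k /\ m_minus lam p = k) /\
     (forall a : nat, (1 <= k)%nat -> (a < k)%nat -> lam = INR k - INR a ->
          (forall i, p i = if Nat.ltb i a then 1 else 0) ->
        (forall j : nat, ebs_pmf lam p j =
            if Nat.ltb j a then 0 else poisson_pmf (INR k - INR a) (j - a)) /\
        m_plus lam p = k /\ m_minus lam p = (k - 1)%nat)).
Proof.
 destruct Hnabla as [Hl [Hp0 [Hdec [Hnn Hs]]]].
 assert (Hp : goodp p).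
 { intros i. split. apply Hnn. apply Rle_trans with (p 0%nat); auto. apply p_le_p0; auto. }
 split.
 - intros k Hk. apply (part1 lam p); auto.
 - intros k Hmu. split.
   + intros HNE. assert (Hst := NE_strict lam p Hl Hp Hs Hdec k Hmu HNE).
     destruct (part2_gen lam p Hl Hp Hs k Hmu ltac:(lra)) as [H1 _]. apply H1; auto.
   + intros a Hk1 Hak Hlam Hpi.
     assert (Ha : forall i, p i = ind a i) by (intros; rewrite Hpi; reflexivity).
     assert (Hform : forall j, ebs_pmf lam p j = if Nat.ltb j a then 0 else poisson_pmf (INR k - INR a) (j - a)).
     { intros j. rewrite (ebs_ind lam p a j Ha). rewrite Hlam. reflexivity. }
     split; [exact Hform|].
     assert (Htie : sh (ebs_pmf lam p) k = ebs_pmf lam p k).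
     { destruct k as [|k']; [lia|]. cbn [sh]. rewrite !Hform.
       destruct (Nat.ltb_spec k' a); [lia|]. destruct (Nat.ltb_spec (S k') a); [lia|].
       replace (S k' - a)%nat with (S (k' - a)) by lia. rewrite poisson_S.
       assert (E : INR (S (k' - a)) = INR (S k') - INR a) by (rewrite <- minus_INR by lia; f_equal; lia).
       rewrite E. field. assert (INR a < INR (S k')) by (apply lt_INR; lia). lra. }
     destruct (part2_gen lam p Hl Hp Hs k Hmu ltac:(lra)) as [_ H2]. apply H2; auto.
Qed.
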